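(* There is $n_0$ such that the following holds for every $n\ge n_0$. Let $t\ge1$, let $F$ be an $n$-vertex graph, and suppose there is a partition $V(F)=U\cup V$ with $|U|=\lfloor n/2\rfloor$ and $\left|e_F(U,V)-\frac{e(F)}{2}\right|\ge t$. Let $\gamma\in(0,1)$, let $G$ be a subgraph of $K_n$ (on the vertex set of $K_n$), and suppose there is a partition $V(G)=X\cup Y$ with $|X|=\lfloor n/2\rfloor$ and $\left|e_G(X,Y)-\frac12|X||Y|\right|\ge\gamma n^2$. Suppose that $\gamma t\ge\frac{10e(F)}{n}$. Then there is a copy $F_0$ of $F$ in $K_n$ with $\left||E(F_0)\cap E(G)|-\frac{e(F)}{2}\right|\ge0.5\gamma t$.
   Context: $e_F(U,V)$ denotes the number of edges of $F$ with one endpoint in $U$ and the other in $V$; $e(F)=|E(F)|$. A copy of $F$ in $K_n$ is a subgraph of $K_n$ isomorphic to $F$. *)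

(* Defs.v *)
From Stdlib Require Import Reals.
From mathcomp Require Import all_boot all_fingroup.

Set Implicit Arguments.
Unset Strict Implicit.
Unset Printing Implicit Defensive.

Definition is_graph (n : nat) (E : {set {set 'I_n}}) : Prop :=
  forall e, e \in E -> #|e| = 2%N.

Definition eUV (n : nat) (E : {set {set 'I_n}}) (U V : {set 'I_n}) : nat :=
  #|[set e in E | [exists x in U, exists y in V, e == [set x; y]]]|.

Definition is_copy (n : nat) (F F0 : {set {set 'I_n}}) : Prop :=
  exists s : {perm 'I_n}, F0 = [set (fun x => s x) @: e | e : {set 'I_n} in F].

(* Main.v *)
Require Import Defs.
From Stdlib Require Import Reals.
From Stdlib Require Import Lra Psatz.

Section RealArith.
Local Open Scope R_scope.

Lemma core (e d de ep u v t g n Dd x0 x1 x2 : R) :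
  0 <= e -> Rabs d >= t -> 2 * t <= e -> 1 <= t -> 0 < g < 1 -> 0 < n ->
  g * t * n >= 10 * e ->
  Rabs de >= 4 * g -> Rabs de <= 1/2 -> Rabs ep <= 1/2 ->
  0 <= u * n <= 1 -> Rabs v * n <= 1/2 ->
  x0 = e / 2 * (de + ep) + e * u * (de - ep) + e * v ->
  Rabs ((x1 + x2) / 2 - (e / 2 * (de + ep) + d * (de - ep))) <= Dd / 2 ->
  n * Dd <= 4 * e ->
  Rabs x0 >= g * t / 2 \/ Rabs x1 >= g * t / 2 \/ Rabs x2 >= g * t / 2.
Proof.
intros he hd het ht hg hn hgt hde1 hde2 hep hu hv hx0 hS hD.
set (eta := e / n).
assert (hgt' : 10 * eta <= g * t).
{ unfold eta. apply (Rmult_le_reg_r n); [lra|]. field_simplify; lra. }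
assert (heta : 0 <= eta) by (unfold eta; apply Rmult_le_pos; [lra|]; left; apply Rinv_0_lt_compat; lra).
assert (heu : 0 <= e * u <= eta).
{ unfold eta; split.
  - apply Rmult_le_pos; [lra|]. destruct hu as [hu1 _].
    apply (Rmult_le_reg_r n); lra.
  - apply (Rmult_le_reg_r n); [lra|]. field_simplify; [|lra]. nra. }
assert (hev : Rabs (e * v) <= eta / 2).
{ rewrite Rabs_mult, (Rabs_pos_eq e he). unfold eta.
  apply (Rmult_le_reg_r n); [lra|]. field_simplify; [|lra]. nra. }
assert (hDd : Dd <= 4 * eta).
{ unfold eta. apply (Rmult_le_reg_r n); [lra|]. field_simplify; lra. }
assert (hdep : Rabs (de - ep) <= 1).
{ eapply Rle_trans; [apply Rabs_triang|]. rewrite Rabs_Ropp. lra. }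
assert (hgt0 : 0 < g * t) by nra.
destruct (Rlt_or_le (Rabs (de - ep)) (Rabs de / 2)) as [hA | hA].
- left.
  assert (h2 : Rabs (de + ep) >= 3 / 2 * Rabs de).
  { assert (Rabs (2 * de) <= Rabs (de + ep) + Rabs (de - ep)).
    { replace (2 * de) with ((de + ep) + (de - ep)) by ring. apply Rabs_triang. }
    rewrite Rabs_mult, (Rabs_pos_eq 2) in H by lra. lra. }
  assert (h3 : Rabs (e / 2 * (de + ep)) >= 3 * e * g).
  { rewrite Rabs_mult, (Rabs_pos_eq (e/2)) by lra. nra. }
  assert (h4 : Rabs (e * u * (de - ep)) <= eta).
  { rewrite Rabs_mult, (Rabs_pos_eq (e * u)) by lra. nra. }
  assert (h5 : Rabs x0 >= Rabs (e / 2 * (de + ep)) - Rabs (e * u * (de - ep)) - Rabs (e * v)).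
  { rewrite hx0.
    assert (Rabs (e / 2 * (de + ep)) <= Rabs (e / 2 * (de + ep) + e * u * (de - ep) + e * v)
              + Rabs (e * u * (de - ep)) + Rabs (e * v)).
    { replace (e / 2 * (de + ep)) with
        ((e / 2 * (de + ep) + e * u * (de - ep) + e * v) + (- (e * u * (de - ep))) + (- (e * v))) at 1 by ring.
      eapply Rle_trans; [apply Rabs_triang|].
      rewrite (Rabs_Ropp (e * v)).
      apply Rplus_le_compat_r.
      eapply Rle_trans; [apply Rabs_triang|]. rewrite Rabs_Ropp. lra. }
    lra. }
  nra.
- destruct (Rle_or_lt (g * t / 2) (Rabs x0)) as [h0|h0]; [left; lra|].
  destruct (Rle_or_lt (g * t / 2) (Rabs x1)) as [h1|h1]; [right; left; lra|].
  destruct (Rle_or_lt (g * t / 2) (Rabs x2)) as [h2|h2]; [right; right; lra|].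
  exfalso.
  set (S := e / 2 * (de + ep) + d * (de - ep)) in *.
  assert (hS1 : Rabs S < g * t / 2 + 2 * eta).
  { assert (Rabs ((x1 + x2) / 2) <= (Rabs x1 + Rabs x2) / 2).
    { unfold Rdiv. rewrite Rabs_mult, (Rabs_pos_eq (/2)) by lra.
      pose proof (Rabs_triang x1 x2). lra. }
    assert (Rabs S <= Rabs ((x1 + x2) / 2) + Rabs ((x1 + x2) / 2 - S)).
    { replace S with ((x1 + x2) / 2 - ((x1 + x2) / 2 - S)) at 1 by ring.
      eapply Rle_trans; [apply Rabs_triang|]. rewrite Rabs_Ropp. lra. }
    lra. }
  assert (hdu : Rabs (d - e * u) >= t - eta).
  { assert (Rabs d <= Rabs (d - e * u) + Rabs (e * u)).
    { replace d with ((d - e * u) + e * u) at 1 by ring. apply Rabs_triang. }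
    rewrite (Rabs_pos_eq (e * u)) in H by lra. lra. }
  assert (hprod : Rabs ((de - ep) * (d - e * u)) >= 2 * g * (t - eta)).
  { rewrite Rabs_mult. apply Rle_ge.
    assert (t >= eta) by nra. apply Rmult_le_compat; lra. }
  assert (hSx : Rabs (S - x0) >= Rabs ((de - ep) * (d - e * u)) - Rabs (e * v)).
  { assert (S - x0 = (de - ep) * (d - e * u) - e * v) by (unfold S; rewrite hx0; ring).
    rewrite H.
    assert (Rabs ((de - ep) * (d - e * u)) <= Rabs ((de - ep) * (d - e * u) - e * v) + Rabs (e * v)).
    { replace ((de - ep) * (d - e * u)) with (((de - ep) * (d - e * u) - e * v) + e * v) at 1 by ring.
      apply Rabs_triang. }
    lra. }
  assert (Rabs (S - x0) <= Rabs S + Rabs x0).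
  { unfold Rminus. eapply Rle_trans; [apply Rabs_triang|]. rewrite Rabs_Ropp. lra. }
  nra.
Qed.

Lemma bridge (k l n a bU bV t g gc gX gY Dd B0 B1 B2 : R) :
  n = k + l -> (l = k \/ l = k + 1) -> 2 <= k ->
  0 <= gc <= k * l -> 0 <= gX <= k * (k - 1) / 2 -> 0 <= gY <= l * (l - 1) / 2 ->
  0 <= a -> 0 <= bU -> 0 <= bV ->
  Rabs (a - (a + bU + bV) / 2) >= t -> 1 <= t -> 0 < g < 1 ->
  Rabs (gc - / 2 * k * l) >= g * n ^ 2 ->
  g * t >= 10 * (a + bU + bV) / n ->
  B1 = a * (gc / (k * l)) + bU * (gX / (k * (k - 1) / 2)) + bV * (gY / (l * (l - 1) / 2)) ->
  B0 = (a + bU + bV) * ((gc + gX + gY) / (k * l + k * (k - 1) / 2 + l * (l - 1) / 2)) ->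
  Rabs (B2 - (a * (gc / (k * l)) + bV * (gX / (k * (k - 1) / 2)) + bU * (gY / (l * (l - 1) / 2)))) <= Dd ->
  n * Dd <= 4 * (a + bU + bV) ->
  Rabs (B0 - (a + bU + bV) / 2) >= g * t / 2 \/ Rabs (B1 - (a + bU + bV) / 2) >= g * t / 2 \/
  Rabs (B2 - (a + bU + bV) / 2) >= g * t / 2.
Proof.
intros hn hl hk hgc hgX hgY ha hbU hbV hd ht hg hG hgt hB1 hB0 hB2 hD.
set (e := a + bU + bV) in *.
assert (hl1 : l >= k) by lra.
assert (hNc : 0 < k * l) by nra.
assert (hNX : 0 < k * (k - 1) / 2) by nra.
assert (hNY : 0 < l * (l - 1) / 2) by nra.
set (rc := gc / (k * l)) in *.
set (rX := gX / (k * (k - 1) / 2)) in *.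
set (rY := gY / (l * (l - 1) / 2)) in *.
assert (egc : gc = rc * (k * l)) by (unfold rc; field; lra).
assert (egX : gX = rX * (k * (k - 1) / 2)) by (unfold rX; field; lra).
assert (egY : gY = rY * (l * (l - 1) / 2)) by (unfold rY; field; lra).
assert (hrc : 0 <= rc <= 1).
{ unfold rc; split; [apply Rmult_le_pos; [lra|left; apply Rinv_0_lt_compat; lra]|].
  apply (Rmult_le_reg_r (k * l)); [lra|]. field_simplify; lra. }
assert (hrX : 0 <= rX <= 1).
{ unfold rX; split; [apply Rmult_le_pos; [lra|left; apply Rinv_0_lt_compat; lra]|].
  apply (Rmult_le_reg_r (k * (k - 1) / 2)); [lra|]. field_simplify; lra. }
assert (hrY : 0 <= rY <= 1).
{ unfold rY; split; [apply Rmult_le_pos; [lra|left; apply Rinv_0_lt_compat; lra]|].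
  apply (Rmult_le_reg_r (l * (l - 1) / 2)); [lra|]. field_simplify; lra. }
clearbody rc rX rY.
set (de := rc - 1/2).
set (dX := rX - 1/2).
set (dY := rY - 1/2).
set (ep := (dX + dY) / 2).
assert (hn2 : 2 <= n) by lra.
assert (hde : Rabs de >= 4 * g).
{ assert (gc - / 2 * k * l = (k * l) * de) by (unfold de; rewrite egc; field).
  rewrite H, Rabs_mult, (Rabs_pos_eq (k * l)) in hG by lra.
  assert (n ^ 2 >= 4 * (k * l)) by (rewrite hn; nra).
  assert (k * l * Rabs de >= k * l * (4 * g)) by nra.
  apply Rle_ge. apply (Rmult_le_reg_l (k * l)); lra. }
assert (hde2 : Rabs de <= 1/2) by (unfold de; apply Rabs_le; lra).
assert (hep : Rabs ep <= 1/2) by (unfold ep, dX, dY; apply Rabs_le; lra).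
assert (hS : Rabs (((B1 - e / 2) + (B2 - e / 2)) / 2 -
                   (e / 2 * (de + ep) + (a - e / 2) * (de - ep))) <= Dd / 2).
{ assert (((B1 - e / 2) + (B2 - e / 2)) / 2 - (e / 2 * (de + ep) + (a - e / 2) * (de - ep))
          = (B2 - (a * rc + bV * rX + bU * rY)) / 2).
  { rewrite hB1. unfold e, de, ep, dX, dY. field. }
  rewrite H. unfold Rdiv. rewrite Rabs_mult, (Rabs_pos_eq (/2)) by lra. lra. }
assert (he : 0 <= e) by (unfold e; lra).
assert (h2t : 2 * t <= e).
{ assert (Rabs (a - e / 2) <= e / 2) by (apply Rabs_le; unfold e; lra). lra. }
assert (hgtn : g * t * n >= 10 * e).
{ apply Rle_ge. apply (Rmult_le_reg_r (/ n)); [apply Rinv_0_lt_compat; lra|].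
  replace (g * t * n * / n) with (g * t) by (field; lra). lra. }
destruct hl as [hl | hl].
-
  assert (hx0 : B0 - e / 2 = e / 2 * (de + ep) + e * (1 / (2 * (n - 1))) * (de - ep) + e * 0).
  { rewrite hB0, egc, egX, egY. unfold de, ep, dX, dY. rewrite hn, hl. field. lra. }
  destruct (@core e (a - e / 2) de ep (1 / (2 * (n - 1))) 0 t g n Dd (B0 - e / 2) (B1 - e / 2) (B2 - e / 2) he hd h2t ht hg ltac:(lra) hgtn hde hde2 hep
    ltac:(split; [apply Rmult_le_pos; [|lra]; apply Rmult_le_pos; [lra|left; apply Rinv_0_lt_compat; lra]
                 | apply (Rmult_le_reg_r (2 * (n - 1))); [lra|]; field_simplify; lra])
    ltac:(rewrite Rabs_R0; lra) hx0 hS ltac:(lra)) as [H|[H|H]]; auto.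
-
  assert (hx0 : B0 - e / 2 = e / 2 * (de + ep) + e * (1 / (2 * n)) * (de - ep) + e * ((dY - dX) / (2 * n))).
  { rewrite hB0, egc, egX, egY. unfold de, ep, dX, dY. rewrite hn, hl. field. lra. }
  assert (hv : Rabs ((dY - dX) / (2 * n)) * n <= 1/2).
  { unfold Rdiv. rewrite Rabs_mult, (Rabs_pos_eq (/ (2 * n))) by (left; apply Rinv_0_lt_compat; lra).
    assert (Rabs (dY - dX) <= 1) by (unfold dY, dX; apply Rabs_le; lra).
    replace (Rabs (dY - dX) * / (2 * n) * n) with (Rabs (dY - dX) / 2) by (field; lra). lra. }
  destruct (@core e (a - e / 2) de ep (1 / (2 * n)) ((dY - dX) / (2 * n)) t g n Dd (B0 - e / 2) (B1 - e / 2) (B2 - e / 2) he hd h2t ht hg ltac:(lra) hgtn hde hde2 hep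
    ltac:(split; [apply Rmult_le_pos; [|lra]; apply Rmult_le_pos; [lra|left; apply Rinv_0_lt_compat; lra]
                 | apply (Rmult_le_reg_r (2 * n)); [lra|]; field_simplify; lra])
    hv hx0 hS ltac:(lra)) as [H|[H|H]]; auto.
Qed.

End RealArith.

From mathcomp Require Import all_boot all_fingroup.
From mathcomp Require Import zify.
Set Implicit Arguments.
Unset Strict Implicit.
Unset Printing Implicit Defensive.

Section Comb.
Variable T : finType.
Implicit Types (W Z A Y : {set T}) (s t : {perm T}) (g h : {set T}) (G F : {set {set T}}).

Definition img s A : {set T} := [set s x | x in A].
Definition cr Z : {set {set T}} :=
  [set g : {set T} | [exists x in Z, exists y in ~: Z, g == [set x; y]]].
Definition inn Z : {set {set T}} := [set g : {set T} | (g \subset Z) && (#|g| == 2)].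
Definition stab s Z := forall z, (s z \in Z) = (z \in Z).

Lemma img_comp s t A : img (s * t) A = img t (img s A).
Proof. rewrite /img -imset_comp; apply: eq_imset => x; by rewrite /= permM. Qed.

Lemma card_img s A : #|img s A| = #|A|.
Proof. apply: card_imset; exact: perm_inj. Qed.

Lemma img_inj s : injective (img s).
Proof. apply: imset_inj; exact: perm_inj. Qed.

Lemma mem_img s A x : (s x \in img s A) = (x \in A).
Proof. apply: mem_imset; exact: perm_inj. Qed.

Lemma img_stab s Z : stab s Z -> img s Z = Z.
Proof.
move=> st; apply/eqP; rewrite eqEcard card_img leqnn andbT.
by apply/subsetP=> _ /imsetP[x xZ ->]; rewrite st.
Qed.

Lemma stabC s Z : stab s Z -> stab s (~: Z).
Proof. by move=> st z; rewrite !inE st. Qed.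

Lemma stabM s t Z : stab s Z -> stab t Z -> stab (s * t) Z.
Proof. by move=> h1 h2 z; rewrite permM h2 h1. Qed.

Lemma stab_tperm a b Z : (a \in Z) = (b \in Z) -> stab (tperm a b) Z.
Proof. by move=> e z; case: tpermP => [->|->|] //. Qed.

Lemma img_set2 s x y : img s [set x; y] = [set s x; s y].
Proof. by rewrite /img imsetU1 imset_set1. Qed.

Lemma img_out s W Z x : img s W = Z -> (s x \in Z) = (x \in W).
Proof. by move<-; exact: mem_img. Qed.

Lemma cr_img s W Z g : img s W = Z -> g \in cr W -> img s g \in cr Z.
Proof.
move=> e; rewrite !inE => /exists_inP[x xW /exists_inP[y yW /eqP->]].
apply/exists_inP; exists (s x); first by rewrite (img_out _ e).
apply/exists_inP; exists (s y); first by rewrite !inE (img_out _ e) -in_setC.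
by rewrite img_set2.
Qed.

Lemma inn_img s Y Y' g : (forall x, (s x \in Y') = (x \in Y)) ->
  g \in inn Y -> img s g \in inn Y'.
Proof.
move=> h; rewrite !inE card_img => /andP[sub ->]; rewrite andbT.
apply/subsetP => _ /imsetP[x xg ->]; rewrite h; exact: (subsetP sub x xg).
Qed.

Lemma cr_trans Z h h' : h \in cr Z -> h' \in cr Z ->
  exists t, stab t Z /\ img t h = h'.
Proof.
have neq a b : a \in Z -> b \in ~: Z -> a != b.
  by move=> aZ; rewrite inE; apply: contraNneq => <-.
rewrite !inE => /exists_inP[x xZ /exists_inP[y yZ /eqP->]].
move=> /exists_inP[x' x'Z /exists_inP[y' y'Z /eqP->]].
exists (tperm x x' * tperm y y')%g; split.
  apply: stabM; apply: stab_tperm; first by rewrite xZ x'Z.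
  by move: yZ y'Z; rewrite !inE => /negbTE-> /negbTE->.
rewrite img_set2 !permM tpermL.
have h1 : tperm y y' x' = x' by apply: tpermD; rewrite eq_sym; apply: neq.
have h2 : tperm x x' y = y by apply: tpermD; apply: neq.
by rewrite h1 h2 tpermL.
Qed.

Lemma inn_trans Y h h' : h \in inn Y -> h' \in inn Y ->
  exists t, stab t Y /\ img t h = h'.
Proof.
rewrite !inE => /andP[hY /cards2P[x1 [x2 [nx ehh]]]].
move=> /andP[h'Y /cards2P[y1 [y2 [ny eh']]]].
subst h h'.
have x1Y : x1 \in Y by apply: (subsetP hY); rewrite !inE eqxx.
have x2Y : x2 \in Y by apply: (subsetP hY); rewrite !inE eqxx orbT.
have y1Y : y1 \in Y by apply: (subsetP h'Y); rewrite !inE eqxx.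
have y2Y : y2 \in Y by apply: (subsetP h'Y); rewrite !inE eqxx orbT.
have st1 : stab (tperm x1 y1) Y by apply: stab_tperm; rewrite x1Y y1Y.
set w := tperm x1 y1 x2.
have wY : w \in Y by rewrite /w st1.
exists (tperm x1 y1 * tperm w y2)%g; split.
  by apply: stabM => //; apply: stab_tperm; rewrite wY y2Y.
rewrite img_set2 !permM tpermL -/w tpermL.
have wy1 : w != y1.
  rewrite /w -{2}(tpermL x1 y1); apply: contra_neq nx => /perm_inj ->; done.
rewrite tpermD //; by rewrite eq_sym.
Qed.


Lemma img1 A : img 1 A = A.
Proof. by rewrite /img imset_perm1. Qed.

Lemma exists_img W Z : #|W| = #|Z| -> exists s, img s W = Z.
Proof.
move: {2}#|W :\: Z| (leqnn #|W :\: Z|) => m.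
elim: m W => [|m IH] W hm eWZ.
  have sub : W \subset Z.
    apply/subsetP => x xW; apply: contraT => xZ.
    have : x \in W :\: Z by rewrite inE xZ.
    by move: hm; rewrite leqn0 => /eqP/cards0_eq ->; rewrite inE.
  exists 1%g; rewrite img1; apply/eqP; by rewrite eqEcard sub eWZ leqnn.
have [sub|] := boolP (W \subset Z).
  exists 1%g; rewrite img1; apply/eqP; by rewrite eqEcard sub eWZ leqnn.
case/subsetPn => w wW wZ.
have [z zZ zW] : exists2 z, z \in Z & z \notin W.
  case: (boolP (Z \subset W)) => [sub|/subsetPn[z zZ zW]]; last by exists z.
  have eZW : Z = W by apply/eqP; rewrite eqEcard sub eWZ leqnn.
  by move: wZ; rewrite eZW wW.
set W' := img (tperm w z) W.
have hW' : #|W' :\: Z| <= m.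
  have : W' :\: Z \subset (W :\: Z) :\ w.
    apply/subsetP => x; rewrite !inE => /andP[xZ xW'].
    have : tperm w z x \in W.
      by move: xW'; rewrite /W' -{1}(tpermK w z x) mem_img.
    case: tpermP => [exw|exz|nw nz] hx.
    - by rewrite (negbTE zW) in hx.
    - by rewrite exz zZ in xZ.
    - by apply/and3P; split => //; apply/eqP.
  move/subset_leq_card => h.
  have := cardsD1 w (W :\: Z); rewrite !inE wZ wW /= => e.
  lia.
have [s es] : exists s, img s W' = Z by apply: IH => //; rewrite card_img.
exists (tperm w z * s)%g; by rewrite img_comp.
Qed.

Lemma cr_char Z g : #|g| = 2 ->
  (g \in cr Z) = ~~ (g \subset Z) && ~~ (g \subset ~: Z).
Proof.
move=> g2; apply/idP/idP.
  rewrite inE => /exists_inP[x xZ /exists_inP[y yZ /eqP->]].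
  apply/andP; split; apply/negP => /subsetP sub.
    by move: (sub y); rewrite !inE eqxx orbT => /(_ isT); move: yZ; rewrite inE => /negbTE->.
  by move: (sub x); rewrite !inE eqxx => /(_ isT); rewrite xZ.
case/andP => /subsetPn[x xg xZ] /subsetPn[y yg yZ].
rewrite inE negbK in yZ.
rewrite inE; apply/exists_inP; exists y => //; apply/exists_inP; exists x; first by rewrite inE.
have nyx : y != x by apply: contraNneq xZ => <-.
rewrite eq_sym eqEcard cards2 nyx g2 leqnn andbT.
by apply/subsetP => u; rewrite !inE => /orP[]/eqP->.
Qed.

Lemma two_nsub0 g Z : #|g| = 2 -> g \subset Z -> g \subset ~: Z -> False.
Proof.
move=> g2 s1 s2; have : (0 < #|g|) by rewrite g2.
case/card_gt0P => x xg; move: (subsetP s1 x xg) (subsetP s2 x xg).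
by rewrite inE => ->.
Qed.

Lemma sum3 (A : {set {set T}}) Z (phi : {set T} -> nat) :
  (forall g, g \in A -> #|g| = 2) ->
  \sum_(g in A) phi g = \sum_(g in A :&: cr Z) phi g +
     \sum_(g in A :&: inn Z) phi g + \sum_(g in A :&: inn (~: Z)) phi g.
Proof.
move=> hA.
rewrite (big_setID (cr Z)) -addnA; congr (_ + _).
rewrite (big_setID (inn Z)); congr (_ + _); apply: eq_bigl => g;
  rewrite !(in_setI, in_setD); case gA: (g \in A); rewrite ?andbF ?andbT //=;
  have g2 := hA g gA; rewrite cr_char // !inE g2 eqxx !andbT;
  case gZ: (g \subset Z); case gC: (g \subset ~: Z) => //=;
  exfalso; exact: (two_nsub0 g2 gZ gC).
Qed.

Lemma card3 (A : {set {set T}}) Z :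
  (forall g, g \in A -> #|g| = 2) ->
  #|A| = #|A :&: cr Z| + #|A :&: inn Z| + #|A :&: inn (~: Z)|.
Proof.
move=> hA; rewrite -!sum1_card; exact: sum3.
Qed.

Definition Cset W Z := [set s : {perm T} | img s W == Z].

Lemma card_part (A : {set {perm T}}) (Q : {set {set T}}) g :
  (forall s, s \in A -> img s g \in Q) ->
  #|A| = \sum_(h in Q) #|[set s in A | img s g == h]|.
Proof.
move=> hQ; rewrite -sum1_card (partition_big (fun s => img s g) (mem Q)) //.
apply: eq_bigr => h _; rewrite -sum1_card; apply: eq_bigl => s; by rewrite inE.
Qed.

Lemma KL W Z (OW OZ : {set {set T}}) G g :
  (forall s, img s W = Z -> forall g, g \in OW -> img s g \in OZ) ->
  (forall h h', h \in OZ -> h' \in OZ -> exists t, stab t Z /\ img t h = h') ->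
  g \in OW ->
  #|[set s in Cset W Z | img s g \in G]| * #|OZ| = #|Cset W Z| * #|G :&: OZ|.
Proof.
move=> tr tt gO.
pose cnt h := #|[set s in Cset W Z | img s g == h]|.
have ecnt h h' : h \in OZ -> h' \in OZ -> cnt h = cnt h'.
  move=> hO h'O; have [t [st eth]] := tt h h' hO h'O.
  rewrite /cnt -!sum1_card; symmetry; rewrite (reindex_inj (mulIg t)) /=.
  apply: eq_bigl => s; rewrite !inE !img_comp -eth.
  by rewrite -{1}(img_stab st) !(inj_eq (@img_inj t)).
have e1 : #|[set s in Cset W Z | img s g \in G]| = \sum_(h in G :&: OZ) cnt h.
  rewrite (@card_part _ (G :&: OZ) g).
    apply: eq_bigr => h; rewrite inE => /andP[hG _]; apply: eq_card => s.
    rewrite !inE; case: (img s g =P h) => [->|]; by rewrite ?hG ?andbF ?andbT.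
  move=> s; rewrite !inE => /andP[/eqP sW sG]; by rewrite sG tr.
have e2 : #|Cset W Z| = \sum_(h in OZ) cnt h.
  apply: card_part => s; rewrite inE => /eqP sW; exact: tr.
case: (set_0Vmem OZ) => [->|[h0 h0O]].
  by rewrite setI0 !cards0 !muln0.
have ec h : h \in OZ -> cnt h = cnt h0.
  by move=> hO; apply: ecnt.
have s1 : \sum_(h in G :&: OZ) cnt h = #|G :&: OZ| * cnt h0.
  rewrite -sum_nat_const; apply: eq_bigr => h; rewrite inE => /andP[_ hO]; exact: ec.
have s2 : \sum_(h in OZ) cnt h = #|OZ| * cnt h0.
  rewrite -sum_nat_const; apply: eq_bigr => h hO; exact: ec.
rewrite e1 e2 s1 s2; lia.
Qed.

Definition fcount F G s := #|[set e in F | img s e \in G]|.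

Lemma card_sep (I : finType) (A : {set I}) (P : pred I) :
  #|[set x in A | P x]| = \sum_(x in A) P x.
Proof.
rewrite -sum1_card big_mkcond /= [RHS]big_mkcond /=; apply: eq_bigr => x _.
by rewrite inE; case: (x \in A); case: (P x).
Qed.

Lemma sum_fcount W Z F G :
  \sum_(s in Cset W Z) fcount F G s =
  \sum_(e in F) #|[set s in Cset W Z | img s e \in G]|.
Proof.
rewrite /fcount.
under eq_bigr do rewrite card_sep.
rewrite exchange_big /=; apply: eq_bigr => e eF.
by rewrite card_sep.
Qed.

Lemma class_sum W Z F G (OW OZ : {set {set T}}) :
  (forall s, img s W = Z -> forall g, g \in OW -> img s g \in OZ) ->
  (forall h h', h \in OZ -> h' \in OZ -> exists t, stab t Z /\ img t h = h') ->
  (\sum_(e in F :&: OW) #|[set s in Cset W Z | img s e \in G]|) * #|OZ| =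
  #|F :&: OW| * (#|Cset W Z| * #|G :&: OZ|).
Proof.
move=> tr tt; rewrite big_distrl /= -sum_nat_const; apply: eq_bigr => e.
rewrite inE => /andP[_ eO]. exact: (KL G tr tt eO).
Qed.

Lemma cr_tr W Z : forall s, img s W = Z -> forall g, g \in cr W -> img s g \in cr Z.
Proof. move=> s e g; exact: cr_img. Qed.

Lemma inn_tr W Z : forall s, img s W = Z -> forall g, g \in inn W -> img s g \in inn Z.
Proof. move=> s e g; apply: inn_img => x; exact: img_out. Qed.

Lemma innC_tr W Z : forall s, img s W = Z -> forall g, g \in inn (~: W) -> img s g \in inn (~: Z).
Proof. move=> s e g; apply: inn_img => x; by rewrite !inE (img_out _ e). Qed.

Lemma cr_tt Z h h' : h \in cr Z -> h' \in cr Z -> exists t, stab t Z /\ img t h = h'.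
Proof. exact: cr_trans. Qed.

Lemma inn_tt Z h h' : h \in inn Z -> h' \in inn Z -> exists t, stab t Z /\ img t h = h'.
Proof. exact: inn_trans. Qed.

Lemma innC_tt Z h h' : h \in inn (~: Z) -> h' \in inn (~: Z) -> exists t, stab t Z /\ img t h = h'.
Proof.
move=> h1 h2; have [t [st e]] := inn_trans h1 h2; exists t; split => // z.
by have := st z; rewrite !inE => /negb_inj.
Qed.

End Comb.

Section Comb2.
Variable T : finType.
Implicit Types (W Z A Y U E : {set T}) (s t : {perm T}) (g h : {set T}) (G F : {set {set T}}).


Lemma cr2 Z g : g \in cr Z -> #|g| = 2.
Proof.
rewrite inE => /exists_inP[x xZ /exists_inP[y yZ /eqP->]].
rewrite cards2; suff -> : x != y by [].
by apply: contraTneq yZ => <-; rewrite inE negbK.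
Qed.

Lemma inn_card Z : #|inn Z| = 'C(#|Z|, 2).
Proof. by rewrite -cards_draws. Qed.

Lemma crT : cr [set: T] = set0.
Proof.
apply/setP => g; rewrite in_set0 /cr in_set; apply/negbTE/negP.
by move=> /exists_inP[x _ /exists_inP[y]]; rewrite in_setC in_setT.
Qed.

Lemma inn0 : inn (~: [set: T]) = set0.
Proof.
apply/setP => g; rewrite in_set0 /inn in_set setCT; apply/negbTE/negP => /andP[].
by rewrite subset0 => /eqP ->; rewrite cards0.
Qed.

Lemma innT_of F : (forall e, e \in F -> #|e| = 2) -> F :&: inn [set: T] = F.
Proof.
move=> hF; apply/setP => g; rewrite !inE subsetT /=.
by case gF: (g \in F); rewrite //= hF.
Qed.

Lemma innT_card Z :
  #|inn [set: T]| = #|cr Z| + #|inn Z| + #|inn (~: Z)|.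
Proof.
rewrite (@card3 _ (inn [set: T]) Z); last by move=> g; rewrite inE => /andP[_ /eqP].
have s1 : cr Z \subset inn [set: T].
  by apply/subsetP => g gc; rewrite inE subsetT (cr2 gc) eqxx.
have s2 Y : inn Y \subset inn [set: T].
  by apply/subsetP => g; rewrite !inE subsetT => /andP[].
by rewrite (setIidPr s1) !(setIidPr (s2 _)).
Qed.

Lemma sub_swap g U E : [disjoint g & E] ->
  ((g \subset ~: U :\: E) = (g \subset ~: U)) /\
  ((g \subset ~: (~: U :\: E)) = (g \subset U)).
Proof.
move=> dis; split; first by rewrite subsetD dis andbT.
apply/idP/idP => /subsetP sub; apply/subsetP => x xg.
  move: (sub x xg); rewrite !inE negb_and !negbK.
  case/orP => // xE; by rewrite (disjointFr dis xg) in xE.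
by rewrite !inE (sub x xg) /= andbF.
Qed.

Lemma swap_cls g U E : #|g| = 2 -> [disjoint g & E] ->
  [/\ (g \in cr (~: U :\: E)) = (g \in cr U),
      (g \in inn (~: U :\: E)) = (g \in inn (~: U)) &
      (g \in inn (~: (~: U :\: E))) = (g \in inn U)].
Proof.
move=> g2 dis; have [h1 h2] := sub_swap U dis.
split.
- by rewrite !cr_char // h1 h2 andbC.
- by rewrite !inE h1.
- by rewrite !inE h2.
Qed.

Definition Dset F E := [set g in F | ~~ [disjoint g & E]].

Lemma card_swap F U E (O' O : {set {set T}}) :
  (forall g, g \in F -> [disjoint g & E] -> (g \in O') = (g \in O)) ->
  #|F :&: O'| = #|Dset F E :&: O'| + #|F :&: O :\: Dset F E| /\
  #|F :&: O| = #|Dset F E :&: O| + #|F :&: O :\: Dset F E|.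
Proof.
move=> hO; set D := Dset F E.
have eq1 : F :&: O' :\: D = F :&: O :\: D.
  apply/setP => g; rewrite /D /Dset !inE; case gF: (g \in F); rewrite /= ?andbF ?andbT //.
  case dis: [disjoint g & E]; rewrite /= ?andbF ?andbT //.
  by rewrite (hO g gF dis).
have eD P : (F :&: P) :&: D = D :&: P.
  apply/setP => g; rewrite /D /Dset !inE.
  by case: (g \in F); case: (g \in P); case: [disjoint g & E].
split; by rewrite -(cardsID D) eD ?eq1.
Qed.

Lemma handshake F U : (forall e, e \in F -> #|e| = 2) -> 0 < #|~: U| ->
  exists2 v0, v0 \in ~: U & #|~: U| * #|[set g in F | v0 \in g]| <= 2 * #|F|.
Proof.
move=> hF lpos; have /card_gt0P[v vV] := lpos.
case: (arg_minnP (fun v => #|[set g in F | v \in g]|) vV) => v0 v0V vmin.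
exists v0 => //.
have : \sum_(v in ~: U) #|[set g in F | v \in g]| <= 2 * #|F|.
  under eq_bigr do rewrite card_sep.
  rewrite exchange_big /= mulnC -sum_nat_const; apply: leq_sum => g gF.
  rewrite -(hF g gF) -card_sep; apply: subset_leq_card; apply/subsetP => x.
  by rewrite inE => /andP[].
apply: leq_trans; rewrite -sum_nat_const; exact: leq_sum.
Qed.

End Comb2.

Lemma eUV_cr n (F : {set {set 'I_n}}) (U : {set 'I_n}) : eUV F U (~: U) = #|F :&: cr U|.
Proof. rewrite /eUV; apply: eq_card => g; by rewrite !inE. Qed.


Section Real.
Variable T : finType.
Implicit Types (W Z A Y : {set T}) (s t : {perm T}) (g h : {set T}) (G F : {set {set T}}).

Local Open Scope R_scope.

Definition rho G (O : {set {set T}}) : R := INR #|G :&: O| / INR #|O|.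
Definition Bv F G W Z : R :=
  INR #|F :&: cr W| * rho G (cr Z) + INR #|F :&: inn W| * rho G (inn Z) +
  INR #|F :&: inn (~: W)| * rho G (inn (~: Z)).

Lemma class_real W Z F G (OW OZ : {set {set T}}) (s0 : {perm T}) :
  img s0 W = Z ->
  (forall s, img s W = Z -> forall g, g \in OW -> img s g \in OZ) ->
  (forall h h', h \in OZ -> h' \in OZ -> exists t, stab t Z /\ img t h = h') ->
  INR (\sum_(e in F :&: OW) #|[set s in Cset W Z | img s e \in G]|) =
  INR #|Cset W Z| * (INR #|F :&: OW| * rho G OZ).
Proof.
move=> e0 tr tt.
have hs := class_sum F G tr tt.
case: (set_0Vmem (F :&: OW)) => [E|[e eF]].
  by rewrite E big_set0 cards0 /=; ring.
have OZ0 : leq 1 #|OZ|.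
  apply/card_gt0P; exists (img s0 e); apply: (tr _ e0); move: eF; rewrite inE => /andP[].
  done.
have hr := f_equal INR hs; rewrite !mult_INR in hr.
have hO : INR #|OZ| <> 0 by apply: not_0_INR; lia.
rewrite /rho; apply: (Rmult_eq_reg_r (INR #|OZ|)) => //.
rewrite hr; field; exact hO.
Qed.


Lemma avg_exists W Z F G : (forall e, e \in F -> #|e| = 2%nat) -> #|W| = #|Z| ->
  (exists s, Bv F G W Z <= INR (fcount F G s)) /\
  (exists s, INR (fcount F G s) <= Bv F G W Z).
Proof.
move=> hF hWZ; have [s0 e0] := exists_img hWZ.
have s0C : s0 \in Cset W Z by rewrite inE e0 eqxx.
have Cpos : 0 < INR #|Cset W Z|.
  apply: lt_0_INR; apply/ltP; apply/card_gt0P; by exists s0.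
have HS : INR (\sum_(s in Cset W Z) fcount F G s) = INR #|Cset W Z| * Bv F G W Z.
  rewrite sum_fcount (@sum3 _ F W _ hF) !plus_INR.
  rewrite (class_real F G e0 (@cr_tr _ W Z) (@cr_tt _ Z)).
  rewrite (class_real F G e0 (@inn_tr _ W Z) (@inn_tt _ Z)).
  rewrite (class_real F G e0 (@innC_tr _ W Z) (@innC_tt _ Z)).
  rewrite /Bv; ring.
split.
  case: (arg_maxnP (fcount F G) s0C) => s1 s1C smax; exists s1.
  have : (\sum_(s in Cset W Z) fcount F G s <= #|Cset W Z| * fcount F G s1)%nat.
    by rewrite -sum_nat_const; apply: leq_sum => s sC; apply: smax.
  move/leP/le_INR; rewrite mult_INR HS => h.
  by apply: (Rmult_le_reg_l _ _ _ Cpos).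
case: (arg_minnP (fcount F G) s0C) => s1 s1C smin; exists s1.
have : (#|Cset W Z| * fcount F G s1 <= \sum_(s in Cset W Z) fcount F G s)%nat.
  by rewrite -sum_nat_const; apply: leq_sum => s sC; apply: smin.
move/leP/le_INR; rewrite mult_INR HS => h.
by apply: (Rmult_le_reg_l _ _ _ Cpos).
Qed.


Lemma rho_bound G (O : {set {set T}}) : 0 <= rho G O <= 1.
Proof.
rewrite /rho.
have le : (#|G :&: O| <= #|O|)%nat by apply: subset_leq_card; apply: subsetIr.
case: (posnP #|O|) => [e0|pos].
  have e1 : #|G :&: O| = 0%nat by move: le; rewrite e0 leqn0 => /eqP.
  rewrite e0 e1 /=; unfold Rdiv; rewrite Rmult_0_l; lra.
have hp : 0 < INR #|O| by apply: lt_0_INR; apply/ltP.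
have hl : INR #|G :&: O| <= INR #|O| by apply: le_INR; apply/leP.
split.
  apply: Rmult_le_pos; [apply: pos_INR | left; apply: Rinv_0_lt_compat; lra].
apply: (Rmult_le_reg_r (INR #|O|)) => //.
unfold Rdiv; rewrite Rmult_assoc Rinv_l; lra.
Qed.

Lemma swap_bound F G U E Z : (forall e, e \in F -> #|e| = 2%nat) ->
  Rabs (Bv F G (~: U :\: E) Z -
        (INR #|F :&: cr U| * rho G (cr Z) + INR #|F :&: inn (~: U)| * rho G (inn Z) +
         INR #|F :&: inn U| * rho G (inn (~: Z)))) <= INR #|Dset F E|.
Proof.
move=> hF.
have hD : forall g, g \in Dset F E -> #|g| = 2%nat.
  by move=> g; rewrite inE => /andP[/hF].
have [a1 b1] := @card_swap T F U E (cr (~: U :\: E)) (cr U)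
  (fun g gF dis => let: And3 h _ _ := swap_cls U (hF g gF) dis in h).
have [a2 b2] := @card_swap T F U E (inn (~: U :\: E)) (inn (~: U))
  (fun g gF dis => let: And3 _ h _ := swap_cls U (hF g gF) dis in h).
have [a3 b3] := @card_swap T F U E (inn (~: (~: U :\: E))) (inn U)
  (fun g gF dis => let: And3 _ _ h := swap_cls U (hF g gF) dis in h).
have c1 := @card3 T (Dset F E) (~: U :\: E) hD.
have c2 := @card3 T (Dset F E) U hD.
have eA : INR #|Dset F E| = INR #|Dset F E :&: cr (~: U :\: E)| +
   INR #|Dset F E :&: inn (~: U :\: E)| + INR #|Dset F E :&: inn (~: (~: U :\: E))|.
  by rewrite {1}c1 !plus_INR.
have eD : INR #|Dset F E| = INR #|Dset F E :&: cr U| + INR #|Dset F E :&: inn U| +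
   INR #|Dset F E :&: inn (~: U)| by rewrite {1}c2 !plus_INR.
rewrite /Bv a1 b1 a2 b2 a3 b3 !plus_INR.
have [r1 r1'] := rho_bound G (cr Z).
have [r2 r2'] := rho_bound G (inn Z).
have [r3 r3'] := rho_bound G (inn (~: Z)).
set A1 := INR #|Dset F E :&: cr (~: U :\: E)| in eA eD *.
set A2 := INR #|Dset F E :&: inn (~: U :\: E)| in eA eD *.
set A3 := INR #|Dset F E :&: inn (~: (~: U :\: E))| in eA eD *.
set C1 := INR #|Dset F E :&: cr U| in eA eD *.
set C2 := INR #|Dset F E :&: inn U| in eA eD *.
set C3 := INR #|Dset F E :&: inn (~: U)| in eA eD *.
have p1 : 0 <= A1 by apply: pos_INR.
have p2 : 0 <= A2 by apply: pos_INR.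
have p3 : 0 <= A3 by apply: pos_INR.
have q1 : 0 <= C1 by apply: pos_INR.
have q2 : 0 <= C2 by apply: pos_INR.
have q3 : 0 <= C3 by apply: pos_INR.
set x1 := rho G (cr Z) in r1 r1' *. set x2 := rho G (inn Z) in r2 r2' *.
set x3 := rho G (inn (~: Z)) in r3 r3' *.
have pb (A x : R) : 0 <= A -> 0 <= x <= 1 -> 0 <= A * x <= A.
  move=> hA [hx hx']; split; [exact: Rmult_le_pos | nra].
have := pb A1 x1 p1 (conj r1 r1'). have := pb A2 x2 p2 (conj r2 r2').
have := pb A3 x3 p3 (conj r3 r3'). have := pb C1 x1 q1 (conj r1 r1').
have := pb C2 x3 q2 (conj r3 r3'). have := pb C3 x2 q3 (conj r2 r2').
move=> *; apply: Rabs_le; split; lra.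
Qed.

Lemma pick_dev F G W Z (r c : R) : (forall e, e \in F -> #|e| = 2%nat) -> #|W| = #|Z| ->
  Rabs (Bv F G W Z - c) >= r -> exists s, Rabs (INR (fcount F G s) - c) >= r.
Proof.
move=> hF hWZ hr; have [[s1 h1] [s2 h2]] := avg_exists G hF hWZ.
case: (Rle_or_lt c (Bv F G W Z)) => hc.
  exists s1; rewrite Rabs_pos_eq in hr; last lra.
  rewrite Rabs_pos_eq; lra.
exists s2; rewrite Rabs_left in hr; last lra.
rewrite Rabs_left1; lra.
Qed.

End Real.

Lemma copy_card n (F G : {set {set 'I_n}}) (s : {perm 'I_n}) :
  is_copy F [set (fun x => s x) @: e | e : {set 'I_n} in F] /\
  #|[set (fun x => s x) @: e | e : {set 'I_n} in F] :&: G| = fcount F G s.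
Proof.
split; first by exists s.
rewrite /fcount -(card_imset [set e in F | img s e \in G] (@img_inj _ s)).
apply: eq_card => h; apply/idP/idP.
  rewrite inE => /andP[/imsetP[e eF ->] hG].
  by apply/imsetP; exists e => //; rewrite inE eF.
case/imsetP => e; rewrite inE => /andP[eF eG] ->.
by rewrite inE eG andbT; apply/imsetP; exists e.
Qed.

Lemma bin2_2 k : 'C(k, 2) * 2 = k * (k - 1).
Proof.
elim: k => [|k IH] //; rewrite binS bin1 mulnDl IH; nia.
Qed.

Lemma binD2 k l : 'C(k + l, 2) = 'C(k, 2) + 'C(l, 2) + k * l.
Proof.
elim: l => [|l IH]; first by rewrite addn0 bin0n addn0 muln0 addn0.
rewrite addnS !binS !bin1 IH; lia.
Qed.

Open Scope R_scope.

Theorem lemma2p1 :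
  exists n0 : nat, forall n : nat, (n0 <= n)%N ->
  forall (t : R) (F : {set {set 'I_n}}),
    1 <= t -> is_graph F ->
    (exists U : {set 'I_n}, #|U| = n./2 /\
       Rabs (INR (eUV F U (~: U)) - INR #|F| / 2) >= t) ->
  forall (gamma : R) (G : {set {set 'I_n}}),
    0 < gamma < 1 -> is_graph G ->
    (exists X : {set 'I_n}, #|X| = n./2 /\
       Rabs (INR (eUV G X (~: X)) - / 2 * INR #|X| * INR #|~: X|)
         >= gamma * INR n ^ 2) ->
    gamma * t >= 10 * INR #|F| / INR n ->
    exists F0 : {set {set 'I_n}}, is_copy F F0 /\
      Rabs (INR #|F0 :&: G| - INR #|F| / 2) >= gamma * t / 2.
Proof.
exists 4%N => n hn t F ht gF [U [cU hU]] gamma G hg gG [X [cX hX]] hgt.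
set k := n./2 in cU cX.
have hodd := odd_double_half n.
have ob := leq_b1 (odd n).
have cT : #|[set: 'I_n]| = n by rewrite cardsT card_ord.
have cVU : #|~: U| = (n - k)%N by have := cardsC U; rewrite card_ord cU; lia.
have cVX : #|~: X| = (n - k)%N by have := cardsC X; rewrite card_ord cX; lia.
set l := (n - k)%N in cVU cVX.
have kl : l = (k + odd n)%N by rewrite /l /k; lia.
have nkl : n = (k + l)%N by rewrite /l /k; lia.
have k2 : (2 <= k)%N by rewrite /k; lia.
clearbody l k.
have lpos : (0 < #|~: U|)%N by rewrite cVU; lia.
have [v0 v0V hdeg] := handshake gF lpos.
rewrite cVU in hdeg.
set E0 := if odd n then [set v0] else set0.
set U' := ~: U :\: E0.
have cU' : #|U'| = k.
  rewrite /U' cardsD cVU; have -> : ~: U :&: E0 = E0.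
    by apply/setIidPr; rewrite /E0; case: (odd n); rewrite ?sub1set ?sub0set.
  rewrite /E0; case: (odd n) kl => /= kl; rewrite ?cards1 ?cards0; lia.
have hDd : (#|Dset F E0| <= #|[set g in F | v0 \in g]|)%N.
  apply: subset_leq_card; apply/subsetP => g; rewrite !inE => /andP[gF' ndis].
  rewrite gF' /=; apply: contraR ndis => nv.
  rewrite /E0; case: (odd n).
    by rewrite disjoint_sym disjoints1.
  by rewrite disjoint_sym; apply/pred0P => x; rewrite !inE.
have nD : (n * #|Dset F E0| <= 4 * #|F|)%N by nia.
have eF : INR #|F| = INR #|F :&: cr U| + INR #|F :&: inn U| + INR #|F :&: inn (~: U)|.
  by rewrite {1}(card3 U gF) !plus_INR.
have eG : INR #|G| = INR #|G :&: cr X| + INR #|G :&: inn X| + INR #|G :&: inn (~: X)|.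
  by rewrite {1}(card3 X gG) !plus_INR.
have ecr : INR #|cr X| = INR k * INR l.
  have e1 := innT_card X; rewrite !inn_card cT cX cVX in e1.
  have e2 := binD2 k l; rewrite -nkl in e2.
  by rewrite -mult_INR; congr INR; lia.
have eiX : INR #|inn X| = INR k * (INR k - 1) / 2.
  have := bin2_2 k; rewrite inn_card cX => e.
  have : INR ('C(k, 2) * 2) = INR (k * (k - 1)) by rewrite e.
  rewrite !mult_INR minus_INR; last by apply/leP; lia.
  simpl INR => h; nra.
have eiY : INR #|inn (~: X)| = INR l * (INR l - 1) / 2.
  have := bin2_2 l; rewrite inn_card cVX => e.
  have : INR ('C(l, 2) * 2) = INR (l * (l - 1)) by rewrite e.
  rewrite !mult_INR minus_INR; last by apply/leP; lia.
  simpl INR => h; nra.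
have eT : INR #|inn [set: 'I_n]| = INR #|cr X| + INR #|inn X| + INR #|inn (~: X)|.
  by rewrite (innT_card X) !plus_INR.
have B0e : Bv F G [set: 'I_n] [set: 'I_n] =
    INR #|F| * ((INR #|G :&: cr X| + INR #|G :&: inn X| + INR #|G :&: inn (~: X)|) /
       (INR #|cr X| + INR #|inn X| + INR #|inn (~: X)|)).
  rewrite /Bv /rho crT inn0 !setI0 cards0 (innT_of gF) (innT_of gG) eG eT /=; ring.
have sw := swap_bound G U E0 X gF.
rewrite -/U' in sw.
have br := @bridge (INR k) (INR l) (INR n) (INR #|F :&: cr U|) (INR #|F :&: inn U|)
  (INR #|F :&: inn (~: U)|) t gamma (INR #|G :&: cr X|) (INR #|G :&: inn X|)
  (INR #|G :&: inn (~: X)|) (INR #|Dset F E0|)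
  (Bv F G [set: 'I_n] [set: 'I_n]) (Bv F G U X) (Bv F G U' X).
have h1 : INR n = INR k + INR l by rewrite nkl plus_INR.
have h2 : INR l = INR k \/ INR l = INR k + 1.
  rewrite kl plus_INR; case: (odd n) => /=; [right|left]; lra.
have h3 : 2 <= INR k by apply: (le_INR 2 k); apply/leP.
have cle (A B : {set {set 'I_n}}) : 0 <= INR #|A :&: B| <= INR #|B|.
  split; first exact: pos_INR.
  by apply: le_INR; apply/leP; apply: subset_leq_card; apply: subsetIr.
have h4 : 0 <= INR #|G :&: cr X| <= INR k * INR l by rewrite -ecr; apply: cle.
have h5 : 0 <= INR #|G :&: inn X| <= INR k * (INR k - 1) / 2 by rewrite -eiX; apply: cle.
have h6 : 0 <= INR #|G :&: inn (~: X)| <= INR l * (INR l - 1) / 2 by rewrite -eiY; apply: cle.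
have h10 : Rabs (INR #|F :&: cr U| -
   (INR #|F :&: cr U| + INR #|F :&: inn U| + INR #|F :&: inn (~: U)|) / 2) >= t.
  by rewrite -eF -eUV_cr.
have h13 : Rabs (INR #|G :&: cr X| - / 2 * INR k * INR l) >= gamma * INR n ^ 2.
  by rewrite -eUV_cr -cX -cVX.
have h14 : gamma * t >= 10 * (INR #|F :&: cr U| + INR #|F :&: inn U| +
   INR #|F :&: inn (~: U)|) / INR n by rewrite -eF.
have h15 : Bv F G U X = INR #|F :&: cr U| * (INR #|G :&: cr X| / (INR k * INR l)) +
   INR #|F :&: inn U| * (INR #|G :&: inn X| / (INR k * (INR k - 1) / 2)) +
   INR #|F :&: inn (~: U)| * (INR #|G :&: inn (~: X)| / (INR l * (INR l - 1) / 2)).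
  by rewrite /Bv /rho ecr eiX eiY.
have h16 : Bv F G [set: 'I_n] [set: 'I_n] =
   (INR #|F :&: cr U| + INR #|F :&: inn U| + INR #|F :&: inn (~: U)|) *
   ((INR #|G :&: cr X| + INR #|G :&: inn X| + INR #|G :&: inn (~: X)|) /
    (INR k * INR l + INR k * (INR k - 1) / 2 + INR l * (INR l - 1) / 2)).
  by rewrite B0e -eF ecr eiX eiY.
have h17 : Rabs (Bv F G U' X - (INR #|F :&: cr U| * (INR #|G :&: cr X| / (INR k * INR l)) +
   INR #|F :&: inn (~: U)| * (INR #|G :&: inn X| / (INR k * (INR k - 1) / 2)) +
   INR #|F :&: inn U| * (INR #|G :&: inn (~: X)| / (INR l * (INR l - 1) / 2))))
   <= INR #|Dset F E0|.
  by move: sw; rewrite /rho ecr eiX eiY.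
have h18 : INR n * INR #|Dset F E0| <= 4 * (INR #|F :&: cr U| + INR #|F :&: inn U| +
   INR #|F :&: inn (~: U)|).
  rewrite -eF; have := le_INR _ _ (elimT leP nD); rewrite !mult_INR /=; lra.
have [H|[H|H]] := br h1 h2 h3 h4 h5 h6 (pos_INR _) (pos_INR _) (pos_INR _) h10 ht hg
   h13 h14 h15 h16 h17 h18; rewrite -eF in H.
- have [s hs] := pick_dev gF (erefl #|[set: 'I_n]|) H.
  have [hc hcard] := copy_card F G s.
  by eexists; split; [exact: hc | rewrite hcard].
- have hWZ : #|U| = #|X| by rewrite cU cX.
  have [s hs] := pick_dev gF hWZ H.
  have [hc hcard] := copy_card F G s.
  by eexists; split; [exact: hc | rewrite hcard].
- have hWZ : #|U'| = #|X| by rewrite cU' cX.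
  have [s hs] := pick_dev gF hWZ H.
  have [hc hcard] := copy_card F G s.
  by eexists; split; [exact: hc | rewrite hcard].
Qed.
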